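(* $\mathbb{R}_{\mathcal{E}^2}\subsetneq\mathbb{R}_{\mathcal{E}^3}$; that is, every $\mathcal{E}^2$-computable real is $\mathcal{E}^3$-computable, and there exists a real number $\alpha$ that is $\mathcal{E}^3$-computable but not $\mathcal{E}^2$-computable.
   Context: $\mathbb{N}=\{0,1,2,\dots\}$. Initial functions: $Z(x)=0$, $S(x)=x+1$, projections $P^n_i(x_1,\dots,x_n)=x_i$. Define $f_0(x,y)=x+1$, $f_1(x,y)=x+y$, $f_2(x,y)=xy$, and for $n\ge2$: $f_{n+1}(x,0)=1$, $f_{n+1}(x,y+1)=f_n(x,f_{n+1}(x,y))$. A function $f$ is obtained by primitive recursion from $g:\mathbb{N}^{m-1}\to\mathbb{N}$, $h:\mathbb{N}^{m+1}\to\mathbb{N}$ if $f(0,\bar x)=g(\bar x)$ and $f(x+1,\bar x)=h(x,f(x,\bar x),\bar x)$; it is obtained by bounded primitive recursion from $g,h,j$ if moreover $f(x,\bar x)\le j(x,\bar x)$ for all arguments. The Grzegorczyk class $\mathcal{E}^n$ is the smallest set of functions containing the initial functions and $f_n$ and closed under composition and bounded primitive recursion (with $g,h,j$ in the class). For a class $\mathcal{F}$ of functions $\mathbb{N}^k\to\mathbb{N}$, an $\mathcal{F}$-sequence is $A(x)=\frac{f(x)-g(x)}{h(x)+1}$ with $f,g,h:\mathbb{N}\to\mathbb{N}$ in $\mathcal{F}$, and $\alpha\in\mathbb{R}$ is $\mathcal{F}$-computable if some $\mathcal{F}$-sequence $A$ satisfies $|A(x)-\alpha|\le\frac1{x+1}$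 for all $x$; $\mathbb{R}_{\mathcal{F}}$ denotes the set of $\mathcal{F}$-computable reals. *)

(* Defs.v *)
From mathcomp Require Import all_boot.
From Stdlib Require Import Reals.

Set Implicit Arguments.
Unset Strict Implicit.

Definition vec (k : nat) := 'I_k -> nat.
Definition fn (k : nat) := vec k -> nat.

Definition vcons (k : nat) (a : nat) (v : vec k) : vec k.+1 :=
  fun i => match unlift ord0 i with None => a | Some j => v j end.
Definition vtail (k : nat) (v : vec k.+1) : vec k := fun i => v (lift ord0 i).

Fixpoint fgrz (n : nat) (x y : nat) {struct n} : nat :=
  match n with
  | 0 => x.+1
  | 1 => x + y
  | 2 => x * y
  | n'.+1 =>
      (fix F (y : nat) : nat :=
         match y with 0 => 1 | y'.+1 => fgrz n' x (F y') end) y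
  end.

Fixpoint primrec (m : nat) (g : fn m) (h : fn m.+2) (y : nat) (xs : vec m) : nat :=
  match y with
  | 0 => g xs
  | y'.+1 => h (vcons y' (vcons (primrec g h y' xs) xs))
  end.

Inductive Grz (n : nat) : forall k : nat, fn k -> Prop :=
  | GrzZero : forall k, Grz n (fun _ : vec k => 0)
  | GrzSucc : Grz n (fun x : vec 1 => (x ord0).+1)
  | GrzProj : forall k (i : 'I_k), Grz n (fun x : vec k => x i)
  | GrzF : Grz n (fun x : vec 2 => fgrz n (x ord0) (x ord_max))
  | GrzComp : forall m k (f : fn m) (gs : 'I_m -> fn k),
      Grz n f -> (forall i, Grz n (gs i)) ->
      Grz n (fun x : vec k => f (fun i => gs i x))
  | GrzBRec : forall m (g : fn m) (h : fn m.+2) (j : fn m.+1),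
      Grz n g -> Grz n h -> Grz n j ->
      (forall x : vec m.+1, primrec g h (x ord0) (vtail x) <= j x) ->
      Grz n (fun x : vec m.+1 => primrec g h (x ord0) (vtail x))
  | GrzExt : forall k (f g : fn k), Grz n f -> (forall x, f x = g x) -> Grz n g.

Definition Grz1 (n : nat) (f : nat -> nat) : Prop :=
  Grz n (fun x : vec 1 => f (x ord0)).

Definition seqA (f g h : nat -> nat) (x : nat) : R :=
  ((INR (f x) - INR (g x)) / (INR (h x) + 1))%R.

Definition Ecomputable (n : nat) (alpha : R) : Prop :=
  exists f g h : nat -> nat, Grz1 n f /\ Grz1 n g /\ Grz1 n h /\
    forall x : nat, (Rabs (seqA f g h x - alpha) <= 1 / (INR x + 1))%R.

Example fgrz_check : fgrz 3 2 3 = 8 /\ fgrz 4 2 3 = 16 /\ fgrz 2 3 4 = 12.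
Proof. repeat split; reflexivity. Qed.

(* Main.v *)
Require Import Defs.
From mathcomp Require Import all_boot.
From Stdlib Require Import Reals.
Set Warnings "-notation-overridden".
From mathcomp Require Import all_boot zify.
From Stdlib Require Import FunctionalExtensionality Lia Lra Psatz.
Set Implicit Arguments.
Unset Strict Implicit.

Notation E := (Grz 3).

Lemma vcons0 k a (v : vec k) : vcons a v ord0 = a.
Proof. by rewrite /vcons unlift_none. Qed.
Lemma vconsS k a (v : vec k) i : vcons a v (lift ord0 i) = v i.
Proof. by rewrite /vcons liftK. Qed.
Lemma vtail_vcons k a (v : vec k) : vtail (vcons a v) = v.
Proof. apply: functional_extensionality => i; exact: vconsS. Qed.
Lemma vcons_eta k (x : vec k.+1) : vcons (x ord0) (vtail x) = x.
Proof.
apply: functional_extensionality => i; rewrite /vcons /vtail.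
by case: unliftP => [j ->|->].
Qed.

Fixpoint nrec (g : nat) (h : nat -> nat -> nat) (y : nat) : nat :=
  match y with 0 => g | y'.+1 => h y' (nrec g h y') end.

Lemma primrec_nrec m (g : fn m) (h : fn m.+2) y xs :
  primrec g h y xs = nrec (g xs) (fun i r => h (vcons i (vcons r xs))) y.
Proof. by elim: y => //= y ->. Qed.

Lemma E_ext k (f g : fn k) : E f -> (forall x, f x = g x) -> E g.
Proof. exact: GrzExt. Qed.

Lemma E_proj k (i : 'I_k) : E (fun x : vec k => x i).
Proof. exact: GrzProj. Qed.

Lemma E_zero k : E (fun _ : vec k => 0).
Proof. exact: GrzZero. Qed.

Lemma E_succ k (f : fn k) : E f -> E (fun x => (f x).+1).
Proof.
move=> Hf.
exact: (GrzComp (gs := fun _ : 'I_1 => f) (@GrzSucc 3) (fun _ => Hf)).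
Qed.

Lemma E_const k c : E (fun _ : vec k => c).
Proof. elim: c => [|c IH]; [exact: E_zero| exact: E_succ]. Qed.

Lemma E_comp m k (F : fn m) (gs : 'I_m -> fn k) :
  E F -> (forall i, E (gs i)) -> E (fun x => F (fun i => gs i x)).
Proof. exact: GrzComp. Qed.

Lemma E_weak k (f : fn k) : E f -> E (fun v : vec k.+1 => f (vtail v)).
Proof.
move=> Hf.
exact: (E_comp (gs := fun i (v : vec k.+1) => v (lift ord0 i)) Hf (fun i => E_proj _)).
Qed.

Lemma E_vcons k (F : fn k.+1) (t : fn k) :
  E F -> E t -> E (fun x => F (vcons (t x) x)).
Proof.
move=> HF Ht.
have := E_comp (gs := fun i (x : vec k) => vcons (t x) x i) HF.
apply.
move=> i; rewrite /vcons; case: unliftP => [j _|_] /=.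
- exact: E_proj.
- exact: Ht.
Qed.

Definition EE2 (G : nat -> nat -> nat) := E (fun v : vec 2 => G (v ord0) (v ord_max)).
Definition EE1 (g : nat -> nat) := E (fun v : vec 1 => g (v ord0)).

Lemma E_app1 k g (a : fn k) : EE1 g -> E a -> E (fun x => g (a x)).
Proof.
move=> Hg Ha.
exact: (E_comp (gs := fun _ : 'I_1 => a) Hg (fun _ => Ha)).
Qed.

Lemma E_app2 k G (a b : fn k) : EE2 G -> E a -> E b -> E (fun x => G (a x) (b x)).
Proof.
move=> HG Ha Hb.
have := E_comp (gs := fun (i : 'I_2) => if i == ord0 then a else b) HG.
apply. by move=> i; case: (i == ord0).
Qed.

Lemma E_rec k (g : fn k) (h : fn k.+2) (j : fn k.+1) :
  E g -> E h -> E j ->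
  (forall y xs, nrec (g xs) (fun i r => h (vcons i (vcons r xs))) y <= j (vcons y xs)) ->
  E (fun v : vec k.+1 => nrec (g (vtail v)) (fun i r => h (vcons i (vcons r (vtail v)))) (v ord0)).
Proof.
move=> Hg Hh Hj Hb.
have := GrzBRec Hg Hh Hj.
have H : forall x : vec k.+1, primrec g h (x ord0) (vtail x) <= j x.
  by move=> x; rewrite primrec_nrec; have := Hb (x ord0) (vtail x); rewrite vcons_eta.
move/(_ H) => H2; refine (E_ext H2 _) => x; exact: primrec_nrec.
Qed.

Lemma E_rec_at k (g : fn k) (h : fn k.+2) (j : fn k.+1) (t : fn k) :
  E g -> E h -> E j -> E t ->
  (forall y xs, nrec (g xs) (fun i r => h (vcons i (vcons r xs))) y <= j (vcons y xs)) ->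
  E (fun xs => nrec (g xs) (fun i r => h (vcons i (vcons r xs))) (t xs)).
Proof.
move=> Hg Hh Hj Ht Hb.
have := E_vcons (E_rec Hg Hh Hj Hb) Ht.
move=> HH; refine (E_ext HH _) => x. by rewrite vtail_vcons vcons0.
Qed.

Lemma fgrz3 a b : fgrz 3 a b = a ^ b.
Proof. elim: b => [|b IH] //=. by rewrite /= in IH; rewrite IH expnS. Qed.

Lemma E2_pow : EE2 expn.
Proof. have := @GrzF 3. move=> HH; refine (E_ext HH _) => x. by rewrite fgrz3. Qed.

Lemma E_pow k (a b : fn k) : E a -> E b -> E (fun x => a x ^ b x).
Proof. exact: E_app2 E2_pow. Qed.

Lemma E_v0 k : E (fun v : vec k.+1 => v ord0).
Proof. exact: E_proj. Qed.
Lemma E_v1 k : E (fun v : vec k.+2 => vtail v ord0).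
Proof. exact: E_proj. Qed.

Lemma bound_add x y : x + y <= y.+2 ^ x.+2.
Proof.
have h1 : x.+1 < 2 ^ x.+1 by apply: ltn_expl.
have h2 : 2 ^ x.+1 <= y.+2 ^ x.+1 by apply: leq_exp2r.
rewrite expnS. nia.
Qed.
Lemma bound_mul x y : x * y <= y.+2 ^ x.+2.
Proof.
have h1 : x.+1 < 2 ^ x.+1 by apply: ltn_expl.
have h2 : 2 ^ x.+1 <= y.+2 ^ x.+1 by apply: leq_exp2r.
rewrite expnS. nia.
Qed.

Lemma E_jbound k : E (fun v : vec k.+2 => (v ord0).+2 ^ (vtail v ord0).+2).
Proof. apply: E_pow; do 2 apply: E_succ; exact: E_proj. Qed.

Lemma E2_add : EE2 addn.
Proof.
have H := @E_rec 1 (fun xs => xs ord0) (fun v => (vtail v ord0).+1)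
  (fun v => (v ord0).+2 ^ (vtail v ord0).+2) (E_proj _) (E_succ (E_v1 _)) (E_jbound _).
have Hn : forall y (xs : vec 1), nrec (xs ord0)
   (fun i r => (vtail (vcons i (vcons r xs)) ord0).+1) y = y + xs ord0.
  move=> y xs; elim: y => //= y ->; by rewrite vtail_vcons vcons0.
have /H : forall y (xs : vec 1), nrec (xs ord0)
   (fun i r => (vtail (vcons i (vcons r xs)) ord0).+1) y <=
   (vcons y xs ord0).+2 ^ (vtail (vcons y xs) ord0).+2.
  move=> y xs; rewrite Hn vtail_vcons vcons0. rewrite addnC. exact: bound_add.
move=> HH; refine (E_ext HH _) => x. rewrite Hn /vtail. congr (_ + x _). exact: val_inj.
Qed.

Lemma E_add k (a b : fn k) : E a -> E b -> E (fun x => a x + b x).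
Proof. exact: E_app2 E2_add. Qed.

Lemma E2_mul : EE2 muln.
Proof.
have H := @E_rec 1 (fun xs => 0) (fun v => vtail v ord0 + vtail (vtail v) ord0)
  (fun v => (v ord0).+2 ^ (vtail v ord0).+2) (E_zero _)
  (E_add (E_v1 _) (E_proj _)) (E_jbound _).
have Hn : forall y (xs : vec 1), nrec 0
   (fun i r => vtail (vcons i (vcons r xs)) ord0 + vtail (vtail (vcons i (vcons r xs))) ord0) y = y * xs ord0.
  move=> y xs; elim: y => //= y ->; by rewrite !vtail_vcons vcons0 mulSn addnC.
have /H : forall y (xs : vec 1), nrec 0
   (fun i r => vtail (vcons i (vcons r xs)) ord0 + vtail (vtail (vcons i (vcons r xs))) ord0) y <=
   (vcons y xs ord0).+2 ^ (vtail (vcons y xs) ord0).+2.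
  move=> y xs; rewrite Hn vtail_vcons vcons0. rewrite mulnC. exact: bound_mul.
move=> HH; refine (E_ext HH _) => x. rewrite Hn /vtail. congr (_ * x _). exact: val_inj.
Qed.

Lemma E_mul k (a b : fn k) : E a -> E b -> E (fun x => a x * b x).
Proof. exact: E_app2 E2_mul. Qed.

Lemma E1_pred : EE1 predn.
Proof.
have H := @E_rec 0 (fun xs => 0) (fun v => v ord0) (fun v => v ord0) (E_zero _)
  (E_proj _) (E_proj _).
have Hn : forall y (xs : vec 0), nrec 0 (fun i r => vcons i (vcons r xs) ord0) y = y.-1.
  by move=> y xs; case: y => //= y; rewrite vcons0.
have /H : forall y (xs : vec 0), nrec 0 (fun i r => vcons i (vcons r xs) ord0) y <= vcons y xs ord0.
  by move=> y xs; rewrite Hn vcons0 leq_pred.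
move=> HH; refine (E_ext HH _) => x. by rewrite Hn.
Qed.

Lemma E2_subr : EE2 (fun b a => a - b).
Proof.
have H := @E_rec 1 (fun xs => xs ord0) (fun v => (vtail v ord0).-1)
  (fun v => vtail v ord0) (E_proj _) (E_app1 E1_pred (E_v1 _)) (E_v1 _).
have Hn : forall y (xs : vec 1), nrec (xs ord0)
   (fun i r => (vtail (vcons i (vcons r xs)) ord0).-1) y = xs ord0 - y.
  move=> y xs; elim: y => [|y IH] /=; first by rewrite subn0.
  by rewrite vtail_vcons vcons0 IH subnS.
have /H : forall y (xs : vec 1), nrec (xs ord0)
   (fun i r => (vtail (vcons i (vcons r xs)) ord0).-1) y <= vtail (vcons y xs) ord0.
  by move=> y xs; rewrite Hn vtail_vcons leq_subr.
move=> HH; refine (E_ext HH _) => x. rewrite Hn /vtail. congr (x _ - _). exact: val_inj.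
Qed.

Lemma E_sub k (a b : fn k) : E a -> E b -> E (fun x => a x - b x).
Proof. move=> Ha Hb. exact: (E_app2 E2_subr Hb Ha). Qed.

Fixpoint sumv k : vec k -> nat :=
  match k with 0 => fun _ => 0 | k'.+1 => fun x => x ord0 + sumv (vtail x) end.

Lemma sumv_vcons k a (v : vec k) : sumv (vcons a v) = a + sumv v.
Proof. by rewrite /= vcons0 vtail_vcons. Qed.

Lemma leq_sumv k (x : vec k) i : x i <= sumv x.
Proof.
elim: k x i => [|k IH] x i; first by case: i.
rewrite /=; case: (unliftP ord0 i) => [j ->|->].
- have := IH (vtail x) j; rewrite /vtail. lia.
- lia.
Qed.

Definition PB k (f : fn k) := exists d, forall x, f x <= (sumv x + 2) ^ d.
Definition P k (f : fn k) := E f /\ PB f.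

Lemma P_E k (f : fn k) : P f -> E f. Proof. by case. Qed.

Lemma P_ext k (f g : fn k) : P f -> (forall x, f x = g x) -> P g.
Proof.
move=> [Hf [d Hd]] Hfg; split; first exact: (E_ext Hf Hfg).
by exists d => x; rewrite -Hfg.
Qed.

Lemma pw_ge1 N d : 0 < (N + 2) ^ d.
Proof. rewrite expn_gt0; apply/orP; left; rewrite addn2. done. Qed.

Lemma pw_mono N a b : a <= b -> (N + 2) ^ a <= (N + 2) ^ b.
Proof. move=> h; apply: leq_pexp2l h; by rewrite addn2. Qed.

Lemma exp_base a b e : a <= b -> a ^ e <= b ^ e.
Proof. move=> h; elim: e => [|e IH] //; rewrite !expnS; exact: leq_mul. Qed.

Lemma pw_baseM N M d : N <= M -> (N + 2) ^ d <= (M + 2) ^ d.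
Proof. move=> h; apply: exp_base; lia. Qed.

Lemma pw_const N c : c <= (N + 2) ^ c.
Proof.
have h1 : c < 2 ^ c by apply: ltn_expl.
have h2 : 2 ^ c <= (N + 2) ^ c by apply: exp_base; lia.
lia.
Qed.


Lemma pw_sum2' N p q : (N + 2) ^ p + (N + 2) ^ q + 2 <= (N + 2) ^ (p + q + 2).
Proof.
have hp := pw_mono N (leq_addr q p).
have hq := pw_mono N (leq_addl p q).
have h1 := pw_ge1 N (p + q).
have e1 : (N + 2) ^ (p + q + 2) = (N+2)^(p+q) * (N+2) * (N+2) by rewrite expnD (expnS _ 1) expn1 mulnA.
rewrite e1.
move: ((N+2)^(p+q)) hp hq h1 => X hp hq h1.
nia.
Qed.

Lemma pw_comp N p d : ((N + 2) ^ p + 2) ^ d <= (N + 2) ^ ((p + 2) * d).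
Proof.
rewrite expnM; apply: exp_base.
rewrite expnD. have := pw_ge1 N p. move: ((N+2)^p) => X hX.
have : 4 <= (N + 2) ^ 2 by rewrite -[4]/(2^2); apply: exp_base; lia.
nia.
Qed.

Lemma P_proj k (i : 'I_k) : P (fun x : vec k => x i).
Proof.
split; first exact: E_proj.
exists 1 => x; rewrite expn1; have := leq_sumv x i; lia.
Qed.

Lemma P_const k c : P (fun _ : vec k => c).
Proof. split; first exact: E_const. exists c => x; exact: pw_const. Qed.

Lemma P_app1 k g (a : fn k) : EE1 g -> (exists d, forall a, g a <= (a + 2) ^ d) ->
  P a -> P (fun x => g (a x)).
Proof.
move=> Hg [d Hd] [Ha [da Hda]]; split; first exact: E_app1.
exists ((da + 2) * d) => x.
apply: leq_trans (Hd _) _.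
apply: leq_trans (pw_comp _ _ _).
apply: exp_base. have := Hda x; lia.
Qed.

Lemma P_app2 k G (a b : fn k) : EE2 G -> (exists d, forall a b, G a b <= (a + b + 2) ^ d) ->
  P a -> P b -> P (fun x => G (a x) (b x)).
Proof.
move=> HG [d Hd] [Ha [da Hda]] [Hb [db Hdb]]; split; first exact: E_app2.
exists ((da + db + 2) * d) => x.
apply: leq_trans (Hd _ _) _.
rewrite expnM; apply: exp_base.
apply: leq_trans (pw_sum2' _ da db).
have := Hda x; have := Hdb x; lia.
Qed.

Lemma P_add k (a b : fn k) : P a -> P b -> P (fun x => a x + b x).
Proof. apply: P_app2 E2_add _. exists 1 => x y; lia. Qed.

Lemma P_mul k (a b : fn k) : P a -> P b -> P (fun x => a x * b x).
Proof. apply: P_app2 E2_mul _. exists 2 => x y; rewrite expnS expn1; nia. Qed.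

Lemma P_sub k (a b : fn k) : P a -> P b -> P (fun x => a x - b x).
Proof.
move=> Ha Hb.
have := P_app2 (G := fun b a => a - b) E2_subr _ Hb Ha; apply.
exists 1 => x y; lia.
Qed.

Lemma P_succ k (a : fn k) : P a -> P (fun x => (a x).+1).
Proof. move=> Ha; apply: (P_ext (P_add Ha (P_const _ 1))) => x; lia. Qed.

Lemma P_pred k (a : fn k) : P a -> P (fun x => (a x).-1).
Proof. move=> Ha; apply: (P_ext (P_sub Ha (P_const _ 1))) => x; lia. Qed.

Definition ifz (c a b : nat) := if c == 0 then a else b.

Lemma P_ifz k (c a b : fn k) : P c -> P a -> P b -> P (fun x => ifz (c x) (a x) (b x)).
Proof.
move=> Hc Ha Hb.
have H := P_add (P_mul Ha (P_sub (P_const _ 1) Hc))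
   (P_mul Hb (P_sub (P_const _ 1) (P_sub (P_const _ 1) Hc))).
apply: (P_ext H) => x; rewrite /ifz; case: (c x) => [|n] /=; lia.
Qed.

Definition eqn' (a b : nat) := ((a - b) + (b - a)).
Lemma eqn'0 a b : (eqn' a b == 0) = (a == b).
Proof. rewrite /eqn'. apply/eqP/eqP; lia. Qed.

Lemma P_eqn' k (a b : fn k) : P a -> P b -> P (fun x => eqn' (a x) (b x)).
Proof. move=> Ha Hb; exact: P_add (P_sub Ha Hb) (P_sub Hb Ha). Qed.

Definition pair (a b : nat) := (a + b) * (a + b) + a.

Definition isqrt (z : nat) :=
  nrec 0 (fun i m => if z < m.+1 * m.+1 then m else i.+1) z.

Lemma bmin_spec (p : nat -> bool) s n : p s -> (forall s', s' < s -> ~~ p s') -> s <= n ->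
  nrec 0 (fun i m => if p m then m else i.+1) n = s.
Proof.
move=> ps hlt.
have low : forall n0, n0 <= s -> nrec 0 (fun i m => if p m then m else i.+1) n0 = n0.
  elim=> [|n0 IH] //= hn. rewrite IH; last lia.
  by rewrite (negbTE (hlt n0 hn)).
elim: n => [|n IH] hn.
- by move: hn; rewrite leqn0 => /eqP ->.
- case: (ltngtP s n.+1) => h.
  + by rewrite /= IH ?ps //; lia.
  + lia.
  + by rewrite -h low.
Qed.

Lemma isqrt_pair a b : isqrt (pair a b) = a + b.
Proof.
rewrite /isqrt /pair.
apply: (bmin_spec (p := fun m => (a + b) * (a + b) + a < m.+1 * m.+1)).
- nia.
- move=> s' hs. rewrite -leqNgt. nia.
- nia.
Qed.

Lemma isqrt_le z : isqrt z <= z.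
Proof.
rewrite /isqrt.
have : forall y, nrec 0 (fun i m => if z < m.+1 * m.+1 then m else i.+1) y <= y.
  elim=> [|n IH] //=. case: ifP => _; lia.
exact.
Qed.

Lemma E1_isqrt : EE1 isqrt.
Proof.
have H := @E_rec_at 1 (fun _ => 0)
  (fun v => ifz ((vtail (vtail v) ord0).+1 - (vtail v ord0).+1 * (vtail v ord0).+1)
                (vtail v ord0) (v ord0).+1)
  (fun v => v ord0) (fun v => v ord0) (E_zero _) _ (E_proj _) (E_proj _).
have Hn : forall y (xs : vec 1), nrec 0 (fun i r =>
   ifz ((vtail (vtail (vcons i (vcons r xs))) ord0).+1 - (vtail (vcons i (vcons r xs)) ord0).+1 * (vtail (vcons i (vcons r xs)) ord0).+1)
       (vtail (vcons i (vcons r xs)) ord0) (vcons i (vcons r xs) ord0).+1) y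
   = nrec 0 (fun i m => if xs ord0 < m.+1 * m.+1 then m else i.+1) y.
  move=> y xs; elim: y => //= y ->. rewrite !vtail_vcons !vcons0 /ifz.
  set m := nrec _ _ _.
  have -> : ((xs ord0).+1 - m.+1 * m.+1 == 0) = (xs ord0 < m.+1 * m.+1) by apply/eqP/idP; lia.
  done.
have Hh : E (fun v : vec 3 => ifz ((vtail (vtail v) ord0).+1 - (vtail v ord0).+1 * (vtail v ord0).+1)
                (vtail v ord0) (v ord0).+1).
  apply: P_E; apply: P_ifz; last (apply: P_succ; exact: P_proj).
  - apply: P_sub; first by apply: P_succ; exact: P_proj.
    apply: P_mul; apply: P_succ; exact: P_proj.
  - exact: P_proj.
have := H Hh.
have Hb : forall y (xs : vec 1), nrec 0 (fun i r =>
   ifz ((vtail (vtail (vcons i (vcons r xs))) ord0).+1 - (vtail (vcons i (vcons r xs)) ord0).+1 * (vtail (vcons i (vcons r xs)) ord0).+1)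
       (vtail (vcons i (vcons r xs)) ord0) (vcons i (vcons r xs) ord0).+1) y <= vcons y xs ord0.
  move=> y xs; rewrite Hn vcons0. elim: y => //= y IH. case: ifP => _; lia.
move/(_ Hb) => HH; refine (E_ext HH _) => x. by rewrite Hn.
Qed.

Definition fst' (z : nat) := z - isqrt z * isqrt z.
Definition snd' (z : nat) := isqrt z - fst' z.

Lemma fst_pair a b : fst' (pair a b) = a.
Proof. rewrite /fst' isqrt_pair /pair. lia. Qed.
Lemma snd_pair a b : snd' (pair a b) = b.
Proof. rewrite /snd' fst_pair isqrt_pair. lia. Qed.

Lemma P_isqrt k (a : fn k) : P a -> P (fun x => isqrt (a x)).
Proof.
apply: P_app1 E1_isqrt _. exists 1 => z. have := isqrt_le z. lia.
Qed.

Lemma P_fst k (a : fn k) : P a -> P (fun x => fst' (a x)).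
Proof. move=> Ha; rewrite /fst'; refine (P_sub Ha _); apply: P_mul; exact: P_isqrt Ha. Qed.
Lemma P_snd k (a : fn k) : P a -> P (fun x => snd' (a x)).
Proof. move=> Ha; rewrite /snd'; apply: P_sub; [exact: P_isqrt Ha | exact: P_fst Ha]. Qed.
Lemma P_pair k (a b : fn k) : P a -> P b -> P (fun x => pair (a x) (b x)).
Proof. move=> Ha Hb; rewrite /pair; apply: P_add => //; apply: P_mul; exact: P_add. Qed.

Definition cons (a l : nat) := (pair a l).+1.
Definition hd (l : nat) := fst' l.-1.
Definition tl (l : nat) := snd' l.-1.
Lemma hd_cons a l : hd (cons a l) = a. Proof. exact: fst_pair. Qed.
Lemma tl_cons a l : tl (cons a l) = l. Proof. exact: snd_pair. Qed.
Lemma cons_neq0 a l : (cons a l == 0) = false. Proof. by []. Qed.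

Lemma P_cons k (a b : fn k) : P a -> P b -> P (fun x => cons (a x) (b x)).
Proof. move=> Ha Hb; rewrite /cons; apply: P_succ; exact: P_pair. Qed.
Lemma P_hd k (a : fn k) : P a -> P (fun x => hd (a x)).
Proof. move=> Ha; rewrite /hd; apply: P_fst; exact: P_pred. Qed.
Lemma P_tl k (a : fn k) : P a -> P (fun x => tl (a x)).
Proof. move=> Ha; rewrite /tl; apply: P_snd; exact: P_pred. Qed.

Arguments pair : simpl never.
Arguments fst' : simpl never.
Arguments snd' : simpl never.
Arguments cons : simpl never.
Arguments hd : simpl never.
Arguments tl : simpl never.

Definition P1 (f : nat -> nat) := P (fun v : vec 1 => f (v ord0)).

Lemma P1_comp k f (a : fn k) : P1 f -> P a -> P (fun x => f (a x)).
Proof.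
move=> [Hf [d Hd]] Ha; apply: P_app1 => //.
exists d => z. have := Hd (fun _ => z). by rewrite /= addn0.
Qed.

Lemma P1_intro (f : nat -> nat) : P (fun v : vec 1 => f (v ord0)) -> P1 f.
Proof. done. Qed.

Definition cZero := pair 0 0.
Definition cSucc := pair 1 0.
Definition cProj i := pair 2 i.
Definition cMul := pair 3 0.
Definition cComp cf m gl := pair 4 (pair cf (pair m gl)).
Definition cRec cg ch := pair 5 (pair cg ch).

Definition fEV c r := pair 0 (pair c r).
Definition fVAR i r := pair 1 (pair i r).
Definition fARGS gl r := pair 2 (pair gl r).
Definition fGATH m acc cf := pair 3 (pair m (pair acc cf)).
Definition fLOOP ch xs i n := pair 4 (pair ch (pair xs (pair i n))).
Definition st K V := pair K V.

Definition mK s := fst' s.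
Definition mV s := snd' s.
Definition mKt s := tl (mK s).
Definition mD s := snd' (hd (mK s)).
Definition mTag s := fst' (hd (mK s)).
Definition eC s := fst' (mD s).
Definition eR s := snd' (mD s).
Definition eCT s := fst' (eC s).
Definition eCD s := snd' (eC s).

Definition stepEV s :=
  ifz (eCT s) (st (mKt s) (cons 0 (mV s)))
 (ifz (eCT s - 1) (st (mKt s) (cons (hd (eR s)).+1 (mV s)))
 (ifz (eCT s - 2) (st (cons (fVAR (eCD s) (eR s)) (mKt s)) (mV s))
 (ifz (eCT s - 3) (st (mKt s) (cons (hd (eR s) * hd (tl (eR s))) (mV s)))
 (ifz (eCT s - 4) (st (cons (fARGS (snd' (snd' (eCD s))) (eR s))
                         (cons (fGATH (fst' (snd' (eCD s))) 0 (fst' (eCD s))) (mKt s))) (mV s))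
      (st (cons (fEV (fst' (eCD s)) (tl (eR s)))
             (cons (fLOOP (snd' (eCD s)) (tl (eR s)) 0 (hd (eR s))) (mKt s))) (mV s)))))).

Definition stepVAR s :=
  ifz (fst' (mD s)) (st (mKt s) (cons (hd (snd' (mD s))) (mV s)))
      (st (cons (fVAR (fst' (mD s) - 1) (tl (snd' (mD s)))) (mKt s)) (mV s)).

Definition stepARGS s :=
  ifz (fst' (mD s)) (st (mKt s) (mV s))
      (st (cons (fEV (hd (fst' (mD s))) (snd' (mD s)))
                (cons (fARGS (tl (fst' (mD s))) (snd' (mD s))) (mKt s))) (mV s)).

Definition stepGATH s :=
  ifz (fst' (mD s)) (st (cons (fEV (snd' (snd' (mD s))) (fst' (snd' (mD s)))) (mKt s)) (mV s))
      (st (cons (fGATH (fst' (mD s) - 1) (cons (hd (mV s)) (fst' (snd' (mD s))))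
                       (snd' (snd' (mD s)))) (mKt s)) (tl (mV s))).

Definition stepLOOP s :=
  ifz (eqn' (fst' (snd' (snd' (mD s)))) (snd' (snd' (snd' (mD s))))) (st (mKt s) (mV s))
      (st (cons (fEV (fst' (mD s)) (cons (fst' (snd' (snd' (mD s))))
                                         (cons (hd (mV s)) (fst' (snd' (mD s))))))
                (cons (fLOOP (fst' (mD s)) (fst' (snd' (mD s)))
                             (fst' (snd' (snd' (mD s)))).+1 (snd' (snd' (snd' (mD s))))) (mKt s)))
          (tl (mV s))).

Definition step s :=
  ifz (mK s) s
 (ifz (mTag s) (stepEV s)
 (ifz (mTag s - 1) (stepVAR s)
 (ifz (mTag s - 2) (stepARGS s)
 (ifz (mTag s - 3) (stepGATH s) (stepLOOP s))))).

Ltac Pauto :=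
  repeat first
    [ exact: P_proj
    | apply: P_const
    | apply: P_ifz
    | apply: P_eqn'
    | apply: P_cons
    | apply: P_hd
    | apply: P_tl
    | apply: P_pair
    | apply: P_fst
    | apply: P_snd
    | apply: P_succ
    | apply: P_add
    | apply: P_mul
    | apply: P_sub ].

Ltac P1tac defs lemmas :=
  apply: P1_intro; rewrite /= ?/st ?/fEV ?/fVAR ?/fARGS ?/fGATH ?/fLOOP; rewrite defs;
  repeat first [ Pauto | apply: P1_comp; [ solve [apply lemmas] | ] ].

Lemma P1_mK : P1 mK. Proof. apply: P1_intro; rewrite /mK; Pauto. Qed.
Lemma P1_mV : P1 mV. Proof. apply: P1_intro; rewrite /mV; Pauto. Qed.
Lemma P1_mKt : P1 mKt. Proof. apply: P1_intro; rewrite /mKt; apply: P_tl; apply: P1_comp P1_mK _; Pauto. Qed.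
Lemma P1_mD : P1 mD. Proof. apply: P1_intro; rewrite /mD; apply: P_snd; apply: P_hd; apply: P1_comp P1_mK _; Pauto. Qed.
Lemma P1_mTag : P1 mTag. Proof. apply: P1_intro; rewrite /mTag; apply: P_fst; apply: P_hd; apply: P1_comp P1_mK _; Pauto. Qed.

Lemma P1_step : P1 step.
Proof.
apply: P1_intro.
rewrite /step /stepEV /stepVAR /stepARGS /stepGATH /stepLOOP /eC /eR /eCT /eCD /mK /mV /mKt /mD /mTag
  /st /fEV /fVAR /fARGS /fGATH /fLOOP.
Pauto.
Qed.

Lemma ifz0 a b : ifz 0 a b = a. Proof. by []. Qed.
Lemma ifzS n a b : ifz n.+1 a b = b. Proof. by []. Qed.
Lemma ifz_cons x l a b : ifz (cons x l) a b = b. Proof. by []. Qed.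

Ltac stepsimp :=
  rewrite /step /stepEV /stepVAR /stepARGS /stepGATH /stepLOOP /eCT /eCD /eC /eR /mKt /mD /mTag /mK /mV
    /cZero /cSucc /cProj /cMul /cComp /cRec;
  rewrite /st /fEV /fVAR /fARGS /fGATH /fLOOP;
  rewrite ?(fst_pair, snd_pair, hd_cons, tl_cons);
  rewrite ?(fst_pair, snd_pair, hd_cons, tl_cons);
  rewrite ?(fst_pair, snd_pair, hd_cons, tl_cons);
  rewrite ?ifz_cons ?subSS ?subn0 ?sub0n ?ifz0 ?ifzS ?ifz0 ?ifzS.

Lemma step_nil V : step (st 0 V) = st 0 V.
Proof. by stepsimp. Qed.
Lemma step_EV_zero r K V : step (st (cons (fEV cZero r) K) V) = st K (cons 0 V).
Proof. by stepsimp. Qed.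
Lemma step_EV_succ r K V : step (st (cons (fEV cSucc r) K) V) = st K (cons (hd r).+1 V).
Proof. by stepsimp. Qed.
Lemma step_EV_proj i r K V : step (st (cons (fEV (cProj i) r) K) V) = st (cons (fVAR i r) K) V.
Proof. by stepsimp. Qed.
Lemma step_EV_mul r K V : step (st (cons (fEV cMul r) K) V) = st K (cons (hd r * hd (tl r)) V).
Proof. by stepsimp. Qed.
Lemma step_EV_comp cf m gl r K V :
  step (st (cons (fEV (cComp cf m gl) r) K) V) = st (cons (fARGS gl r) (cons (fGATH m 0 cf) K)) V.
Proof. by stepsimp. Qed.
Lemma step_EV_rec cg ch r K V :
  step (st (cons (fEV (cRec cg ch) r) K) V) =
  st (cons (fEV cg (tl r)) (cons (fLOOP ch (tl r) 0 (hd r)) K)) V.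
Proof. by stepsimp. Qed.
Lemma step_VAR0 r K V : step (st (cons (fVAR 0 r) K) V) = st K (cons (hd r) V).
Proof. by stepsimp. Qed.
Lemma step_VARS i r K V : step (st (cons (fVAR i.+1 r) K) V) = st (cons (fVAR i (tl r)) K) V.
Proof. by stepsimp. Qed.
Lemma step_ARGS0 r K V : step (st (cons (fARGS 0 r) K) V) = st K V.
Proof. by stepsimp. Qed.
Lemma step_ARGSc g gl r K V : step (st (cons (fARGS (cons g gl) r) K) V) =
  st (cons (fEV g r) (cons (fARGS gl r) K)) V.
Proof. by stepsimp. Qed.
Lemma step_GATH0 acc cf K V : step (st (cons (fGATH 0 acc cf) K) V) = st (cons (fEV cf acc) K) V.
Proof. by stepsimp. Qed.
Lemma step_GATHS m acc cf K v V : step (st (cons (fGATH m.+1 acc cf) K) (cons v V)) =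
  st (cons (fGATH m (cons v acc) cf) K) V.
Proof. by stepsimp. Qed.
Lemma step_LOOP_eq ch xs n K V : step (st (cons (fLOOP ch xs n n) K) V) = st K V.
Proof. stepsimp. by rewrite /eqn' subnn. Qed.
Lemma step_LOOP_lt ch xs i n K F V : i != n ->
  step (st (cons (fLOOP ch xs i n) K) (cons F V)) =
  st (cons (fEV ch (cons i (cons F xs))) (cons (fLOOP ch xs i.+1 n) K)) V.
Proof.
move=> hin. stepsimp.
have -> : eqn' i n = (eqn' i n).-1.+1.
  have : eqn' i n != 0 by rewrite eqn'0.
  lia.
by rewrite ifzS.
Qed.

Fixpoint app k : vec k -> nat -> nat :=
  match k with 0 => fun _ acc => acc | k'.+1 => fun w acc => cons (w ord0) (app (vtail w) acc) end.
Definition enc k (x : vec k) := app x 0.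

Fixpoint pushv k : vec k -> nat -> nat :=
  match k with 0 => fun _ V => V | k'.+1 => fun w V => pushv (vtail w) (cons (w ord0) V) end.

Lemma enc_S k (x : vec k.+1) : enc x = cons (x ord0) (enc (vtail x)).
Proof. by []. Qed.
Lemma enc_vcons k a (v : vec k) : enc (vcons a v) = cons a (enc v).
Proof. by rewrite enc_S vcons0 vtail_vcons. Qed.

Lemma run_VAR k (x : vec k) (i : 'I_k) K V :
  iter i.+1 step (st (cons (fVAR i (enc x)) K) V) = st K (cons (x i) V).
Proof.
elim: k x i K V => [|k IH] x i K V; first by case: i.
case: (unliftP ord0 i) => [j ->|->].
- rewrite iterSr /= enc_S step_VARS tl_cons.
  have := IH (vtail x) j K V. by rewrite /vtail.
- by rewrite /= enc_S step_VAR0 hd_cons.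
Qed.

Lemma run_ARGS m r (cg w : vec m) N :
  (forall i K V, exists n, n <= N /\ iter n step (st (cons (fEV (cg i) r) K) V) = st K (cons (w i) V)) ->
  forall K V, exists n, n <= m * N.+1 + 1 /\
    iter n step (st (cons (fARGS (enc cg) r) K) V) = st K (pushv w V).
Proof.
elim: m cg w => [|m IH] cg w H K V.
- exists 1; split => //. by rewrite /= step_ARGS0.
- have [n0 [hn0 e0]] := H ord0 (cons (fARGS (enc (vtail cg)) r) K) V.
  have H' : forall i K V, exists n, n <= N /\
     iter n step (st (cons (fEV (vtail cg i) r) K) V) = st K (cons (vtail w i) V).
    move=> i; exact: H.
  have [n1 [hn1 e1]] := IH _ _ H' K (cons (w ord0) V).
  exists (n1 + n0 + 1); split; first by rewrite mulSn; lia.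
  rewrite addn1 iterSr enc_S step_ARGSc iterD e0. exact: e1.
Qed.

Lemma run_GATH m j acc (w : vec m) cf K V :
  iter m step (st (cons (fGATH (m + j) acc cf) K) (pushv w V)) =
  st (cons (fGATH j (app w acc) cf) K) V.
Proof.
elim: m j acc w V => [|m IH] j acc w V; first by [].
rewrite iterS addSnnS.
have -> : pushv w V = pushv (vtail w) (cons (w ord0) V) by [].
rewrite IH. exact: step_GATHS.
Qed.

Definition Good k (c : nat) (f : fn k) (d : nat) :=
  (forall x, f x <= (sumv x + 2) ^ d) /\
  (forall x K V, exists n, n <= (sumv x + 2) ^ d /\
      iter n step (st (cons (fEV c (enc x)) K) V) = st K (cons (f x) V)).

Lemma sumv_bound k (w : vec k) B : (forall i, w i <= B) -> sumv w <= k * B.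
Proof.
elim: k w => [|k IH] w H //=.
have := IH (vtail w) (fun i => H _). have := H ord0. rewrite mulSn. lia.
Qed.

Lemma run_LOOP m (g : fn m) (h : fn m.+2) xs y ch Nh :
  (forall i K V, i < y -> exists n, n <= Nh /\
     iter n step (st (cons (fEV ch (enc (vcons i (vcons (primrec g h i xs) xs)))) K) V)
     = st K (cons (h (vcons i (vcons (primrec g h i xs) xs))) V)) ->
  forall t i K V, i + t = y -> exists n, n <= t * Nh.+1 + 1 /\
   iter n step (st (cons (fLOOP ch (enc xs) i y) K) (cons (primrec g h i xs) V))
   = st K (cons (primrec g h y xs) V).
Proof.
move=> H; elim=> [|t IH] i K V hi.
- exists 1; split => //. rewrite addn0 in hi; rewrite -hi /=. exact: step_LOOP_eq.
- have hiy : i < y by lia.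
  have hne : i != y by rewrite neq_ltn hiy.
  have [n0 [hn0 e0]] := H i (cons (fLOOP ch (enc xs) i.+1 y) K) V hiy.
  have [n1 [hn1 e1]] := IH i.+1 K V (ltac:(lia)).
  exists (n1 + n0 + 1); split; first by rewrite mulSn; lia.
  rewrite addn1 iterSr step_LOOP_lt // -!enc_vcons iterD e0. exact: e1.
Qed.

Lemma pw2 N : 2 <= N + 2. Proof. lia. Qed.

Lemma sim k (f : fn k) : Grz 2 f -> exists c d, Good c f d.
Proof.
elim => {k f}.
-
  move=> k; exists cZero, 0; split => // x K V.
  exists 1; split => //. exact: step_EV_zero.
-
  exists cSucc, 1; split.
  + move=> x; rewrite expn1 /=; lia.
  + move=> x K V; exists 1; split; first by rewrite expn1; lia.
    by rewrite /= step_EV_succ enc_S hd_cons.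
-
  move=> k i; exists (cProj i), k.+1; split.
  + move=> x. have := leq_sumv x i. have := pw_const (sumv x) k.+1.
    have := pw_mono (sumv x) (leq0n k.+1). have : sumv x + 2 <= (sumv x + 2) ^ k.+1.
      rewrite -{1}(expn1 (sumv x + 2)); apply: pw_mono. done.
    lia.
  + move=> x K V; exists i.+2; split.
    * have := pw_const (sumv x) k.+1. have := ltn_ord i. lia.
    * by rewrite iterSr step_EV_proj run_VAR.
-
  exists cMul, 2; split.
  + move=> x. rewrite [fgrz 2 _ _]/=. have h1 := leq_sumv x ord0. have h2 := leq_sumv x ord_max.
    rewrite (expnS _ 1) expn1. move: (sumv x) h1 h2 => S h1 h2. nia.

  + move=> x K V; exists 1; split; first by have := pw_ge1 (sumv x) 2; lia.
    rewrite /= step_EV_mul !enc_S !hd_cons tl_cons hd_cons /=.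
    congr (st K (cons (_ * x _) V)). exact: val_inj.
-
  move=> m k f gs _ [cf [df [Gf1 Gf2]]] _ IHg.
  have [cg Hcg] := fin_all_exists IHg.
  have [dg Hdg] := fin_all_exists Hcg.
  set D := \max_(i < m) dg i.
  set A := (m + D + 2) * df.
  exists (cComp cf m (enc cg)), (m + D + A + 3).
  have key : forall x : vec k, let N := sumv x + 2 in
     sumv (fun i => gs i x) + 2 <= N ^ (m + D) + 2 /\
     (forall i K V, exists n, n <= N ^ D /\
        iter n step (st (cons (fEV (cg i) (enc x)) K) V) = st K (cons (gs i x) V)).
    move=> x N; split.
    * have hb : forall i, gs i x <= N ^ D.
        move=> i; apply: leq_trans ((Hdg i).1 x) _; apply: pw_mono; exact: leq_bigmax.
      have := sumv_bound hb. have := pw_const (sumv x) m.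
      rewrite /N expnD. nia.
    * move=> i K V; have [n [hn e]] := (Hdg i).2 x K V; exists n; split => //.
      apply: leq_trans hn _; apply: pw_mono; exact: leq_bigmax.
  have fb : forall x : vec k, f (fun i => gs i x) <= (sumv x + 2) ^ A.
    move=> x; have [k1 _] := key x.
    apply: leq_trans (Gf1 _) _.
    apply: leq_trans (pw_comp _ _ _). apply: exp_base. lia.
  split.
  + move=> x; apply: leq_trans (fb x) _; apply: pw_mono; lia.
  + move=> x K V.
    have [_ k2] := key x.
    have [nA [hnA eA]] := run_ARGS k2 (cons (fGATH m 0 cf) K) V.
    have [nf [hnf0 ef]] := Gf2 (fun i => gs i x) K V.
    exists (nf + (1 + (m + (nA + 1)))); split.
    * have hnf0' : nf <= (sumv x + 2) ^ A.
        apply: leq_trans hnf0 _. apply: leq_trans (pw_comp _ _ _). apply: exp_base.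
        have [k1 _] := key x. lia.
      have hm := pw_const (sumv x) m.
      have X1 := pw_ge1 (sumv x) m. have X2 := pw_ge1 (sumv x) D. have X3 := pw_ge1 (sumv x) A.
      have e3 : (sumv x + 2) ^ 3 >= 8 by rewrite -[8]/(2^3); apply: exp_base; lia.
      rewrite !expnD.
      move: hnA hnf0' hm X1 X2 X3 e3. rewrite (mulnC m).
      move: ((sumv x + 2) ^ m) ((sumv x + 2) ^ D) ((sumv x + 2) ^ A) ((sumv x + 2) ^ 3) => XM XD XA X8.
      move=> hnA hnfx hm X1 X2 X3 e3.
      have h1 : XM * XD >= 1 by nia.
      have h2 : XM * XD * XA >= XM * XD by nia.
      have h3 : XD * m <= XM * XD by nia.
      have h4 : XM * XD * XA * X8 >= 8 * (XM * XD * XA) by nia.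
      have h5 : XA <= XM * XD * XA by nia.
      have h6 : m <= XM * XD * XA by nia.
      nia.
    * rewrite !iterD /= step_EV_comp eA.
      have := run_GATH 0 0 (fun i => gs i x) cf K V. rewrite addn0 => ->.
      rewrite step_GATH0. exact: ef.
-
  move=> m g h j _ [cg [dg [Gg1 Gg2]]] _ [ch [dh [Gh1 Gh2]]] _ [cj [dj [Gj1 Gj2]]] Hb.
  set A := (dj + 3) * dh.
  exists (cRec cg ch), (dg + A + dj + 3 + 3).
  have Rb : forall (x : vec m.+1) i, i <= x ord0 ->
      primrec g h i (vtail x) <= (sumv x + 2) ^ dj.
    move=> x i hi. have := Hb (vcons i (vtail x)). rewrite vcons0 vtail_vcons => H1.
    apply: leq_trans H1 _. apply: leq_trans (Gj1 _) _. apply: exp_base.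
    rewrite sumv_vcons /=. lia.
  split.
  + move=> x. apply: leq_trans (Rb x _ (leqnn _)) _. apply: pw_mono. lia.
  + move=> x K V.
    set N := sumv x + 2.
    have hS : sumv x = x ord0 + sumv (vtail x) by [].
    have [ng [hng eg]] := Gg2 (vtail x) (cons (fLOOP ch (enc (vtail x)) 0 (x ord0)) K) V.
    have HL : forall i K V, i < x ord0 -> exists n, n <= N ^ A /\
       iter n step (st (cons (fEV ch (enc (vcons i (vcons (primrec g h i (vtail x)) (vtail x))))) K) V)
       = st K (cons (h (vcons i (vcons (primrec g h i (vtail x)) (vtail x)))) V).
      move=> i K0 V0 hi.
      have [n [hn e]] := Gh2 (vcons i (vcons (primrec g h i (vtail x)) (vtail x))) K0 V0.
      exists n; split => //. apply: leq_trans hn _.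
      rewrite /A expnM. apply: exp_base. rewrite !sumv_vcons.
      have := Rb x i (ltnW hi). have := pw_sum2' (sumv x) 1 dj. rewrite expn1. 
      rewrite -/N. have -> : 1 + dj + 2 = dj + 3 by lia.
      have hN : N = x ord0 + sumv (vtail x) + 2 by rewrite /N hS.
      move: (N ^ dj) (N ^ (dj + 3)) => P1 P2. lia.
    have [nL [hnL eL]] := @run_LOOP _ _ _ _ _ _ _ HL (x ord0) 0 K V (add0n _).
    exists (nL + (ng + 1)); split.
    * have hng' : ng <= N ^ dg. apply: leq_trans hng _. apply: exp_base. lia.
      have X1 := pw_ge1 (sumv x) dg. have X2 := pw_ge1 (sumv x) A. have X3 := pw_ge1 (sumv x) dj.
      have e3 : (sumv x + 2) ^ 3 >= 8 by rewrite -[8]/(2^3); apply: exp_base; lia.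
      have hy : x ord0 <= N by lia.
      have hN : N <= (sumv x + 2) ^ 3.
        rewrite /N -{1}(expn1 (sumv x + 2)). exact: pw_mono.
      rewrite -/N in X1 X2 X3 e3 hN.
      rewrite !expnD.
      move: hnL hng' X1 X2 X3 e3 hy hN.
      move: (N ^ dg) (N ^ A) (N ^ dj) (N ^ 3) => XG XA XJ X8.
      move=> hnL hng' X1 X2 X3 e3 hy hN.
      have h0 := leq_mul (leq_trans hy hN) (leqnn XA.+1).
      have h1 : x ord0 * XA.+1 <= 2 * X8 * XA by nia.
      have p1 : XG * XJ >= 1 by rewrite muln_gt0 X1 X3.
      have p2 : XA * X8 >= 1 by rewrite muln_gt0 X2; lia.
      have p3 : XA * XJ * X8 >= 1 by rewrite !muln_gt0 X2 X3; lia.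
      have q1 : XG * XA * XJ * X8 >= X8 * XA.
        have -> : XG * XA * XJ * X8 = (X8 * XA) * (XG * XJ) by nia.
        exact: leq_pmulr.
      have q2 : XG * XA * XJ * X8 >= XG.
        have -> : XG * XA * XJ * X8 = XG * (XA * XJ * X8) by nia.
        exact: leq_pmulr.
      have q3 : XG * XA * XJ * X8 >= 1 by lia.
      move: (XG * XA * XJ * X8) q1 q2 q3 => PP q1 q2 q3.
      nia.
    * rewrite !iterD /= step_EV_rec enc_S tl_cons hd_cons eg. exact: eL.
-
  move=> k f g _ [c [d [H1 H2]]] e; exists c, d; split.
  + by move=> x; rewrite -e.
  + by move=> x K V; rewrite -e.
Qed.

Lemma E_ifz k (c a b : fn k) : E c -> E a -> E b -> E (fun x => ifz (c x) (a x) (b x)).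
Proof.
move=> Hc Ha Hb.
have H := E_add (E_mul Ha (E_sub (E_const _ 1) Hc))
   (E_mul Hb (E_sub (E_const _ 1) (E_sub (E_const _ 1) Hc))).
refine (E_ext H _) => x; rewrite /ifz; case: (c x) => [|n] /=; lia.
Qed.
Lemma E_isqrt k (a : fn k) : E a -> E (fun x => isqrt (a x)).
Proof. exact: E_app1 E1_isqrt. Qed.
Lemma E_fst k (a : fn k) : E a -> E (fun x => fst' (a x)).
Proof. move=> Ha; rewrite /fst'; refine (E_sub Ha _); apply: E_mul; exact: E_isqrt Ha. Qed.
Lemma E_snd k (a : fn k) : E a -> E (fun x => snd' (a x)).
Proof. move=> Ha; rewrite /snd'; apply: E_sub; [exact: E_isqrt Ha | exact: E_fst Ha]. Qed.
Lemma E_pair k (a b : fn k) : E a -> E b -> E (fun x => pair (a x) (b x)).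
Proof. move=> Ha Hb; rewrite /pair; apply: E_add => //; apply: E_mul; exact: E_add. Qed.
Lemma E_cons k (a b : fn k) : E a -> E b -> E (fun x => cons (a x) (b x)).
Proof. move=> Ha Hb; rewrite /cons; apply: E_succ; exact: E_pair. Qed.
Lemma E_pred k (a : fn k) : E a -> E (fun x => (a x).-1).
Proof. move=> Ha; have H := E_sub Ha (E_const _ 1). refine (E_ext H _) => x; lia. Qed.
Lemma E_hd k (a : fn k) : E a -> E (fun x => hd (a x)).
Proof. move=> Ha; rewrite /hd; apply: E_fst; exact: E_pred. Qed.
Lemma E_tl k (a : fn k) : E a -> E (fun x => tl (a x)).
Proof. move=> Ha; rewrite /tl; apply: E_snd; exact: E_pred. Qed.

Lemma step_bound : exists e, forall s, step s + 2 <= (s + 2) ^ e.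
Proof.
have [_ [d Hd]] := P1_step.
exists (d + 2) => s. have := Hd (fun _ => s). rewrite /= addn0 => h.
have := pw_ge1 s d. rewrite expnD.
have : 4 <= (s + 2) ^ 2 by rewrite -[4]/(2^2); apply: exp_base; lia.
move: ((s+2)^d) ((s+2)^2) h => X Y h hY hX. nia.
Qed.

Lemma iter_bound e s t : (forall s, step s + 2 <= (s + 2) ^ e) ->
  iter t step s + 2 <= (s + 2) ^ (e ^ t).
Proof.
move=> Hd; elim: t => [|t IH]; first by rewrite expn0 expn1.
rewrite iterS. apply: leq_trans (Hd _) _.
rewrite expnSr expnM. exact: exp_base.
Qed.

Lemma EE1_step : EE1 step.
Proof. by case: P1_step. Qed.

Lemma E_iter k (a b : fn k) : E a -> E b -> E (fun x => iter (a x) step (b x)).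
Proof.
move=> Ha Hb.
have [e He] := step_bound.
have Hh : E (fun v : vec 3 => step (vtail v ord0)).
  apply: E_app1 EE1_step _. exact: E_proj.
have Hj : E (fun v : vec 2 => (vtail v ord0 + 2) ^ (e ^ (v ord0))).
  apply: E_pow; [apply: E_add; [exact: E_proj | exact: E_const] |
                 apply: E_pow; [exact: E_const | exact: E_proj]].
have Hn : forall y (xs : vec 1), nrec (xs ord0) (fun i r => step (vtail (vcons i (vcons r xs)) ord0)) y
          = iter y step (xs ord0).
  move=> y xs; elim: y => //= y ->. by rewrite vtail_vcons vcons0.
have H := @E_rec 1 (fun xs => xs ord0) _ _ (E_proj _) Hh Hj.
have Hb2 : forall y (xs : vec 1), nrec (xs ord0) (fun i r => step (vtail (vcons i (vcons r xs)) ord0)) y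
   <= (vtail (vcons y xs) ord0 + 2) ^ (e ^ (vcons y xs ord0)).
  move=> y xs; rewrite Hn vtail_vcons vcons0. have := iter_bound (xs ord0) y He. lia.
have H2 := H Hb2.
have H3 : E (fun v : vec 2 => iter (v ord0) step (vtail v ord0)).
  refine (E_ext H2 _) => v. by rewrite Hn.
have H4 := E_comp (gs := fun (i : 'I_2) => if i == ord0 then a else b) H3.
refine (E_ext (H4 _) _).
- by move=> i; case: (i == ord0).
- by move=> x.
Qed.

Ltac Eauto :=
  repeat first
    [ exact: E_proj
    | apply: E_const
    | apply: E_iter
    | apply: E_ifz
    | apply: E_cons
    | apply: E_hd
    | apply: E_tl
    | apply: E_pair
    | apply: E_fst
    | apply: E_snd
    | apply: E_succ
    | apply: E_pow
    | apply: E_add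
    | apply: E_mul
    | apply: E_sub ].

Definition run (c X T : nat) := hd (snd' (iter T step (st (cons (fEV c (cons X 0)) 0) 0))).

Lemma iter_nil n V : iter n step (st 0 V) = st 0 V.
Proof. elim: n => //= n ->. exact: step_nil. Qed.

Lemma run_ok (f : nat -> nat) : Grz1 2 f ->
  exists c d, forall X T, (X + 2) ^ d <= T -> run c X T = f X.
Proof.
move=> /sim [c [d [_ H]]]; exists c, d => X T hT.
have [n [hn e]] := H (fun _ => X) 0 0.
rewrite /= addn0 in hn.
rewrite /run -(subnK (leq_trans hn hT)) iterD.
have -> : cons X 0 = enc (fun _ : 'I_1 => X) by [].
by rewrite e iter_nil /st snd_pair hd_cons.
Qed.

Definition xk k := 4 ^ (k + 2) - 1.
Definition Tk k := (xk k + 2) ^ k.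
Definition ca k := fst' (fst' k).
Definition cb k := fst' (snd' (fst' k)).
Definition cc k := snd' (snd' (fst' k)).
Definition dec k q :=
  ifz ((12 * q + 4) * (run (cc k) (xk k) (Tk k)).+1 + run (cb k) (xk k) (Tk k) * 3 * 4 ^ (k + 1)
       - run (ca k) (xk k) (Tk k) * 3 * 4 ^ (k + 1)) 0 1.
Definition Qf k := nrec 0 (fun i q => 4 * q + 2 * dec i q) k.

Lemma dec_le1 k q : dec k q <= 1.
Proof. rewrite /dec /ifz; case: ifP => //. Qed.

Lemma Qf_S k : Qf k.+1 = 4 * Qf k + 2 * dec k (Qf k).
Proof. by []. Qed.

Lemma Qf_lt k : Qf k < 4 ^ k.
Proof.
elim: k => [|k IH]; first by [].
rewrite Qf_S expnS. have := dec_le1 k (Qf k). lia.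
Qed.

Lemma Grz_Qf : Grz1 3 Qf.
Proof.
have Hh : E (fun v : vec 2 => 4 * vtail v ord0 + 2 * dec (v ord0) (vtail v ord0)).
  rewrite /dec /xk /Tk /ca /cb /cc /run /st /fEV.
  Eauto.
have Hj : E (fun v : vec 1 => 4 ^ (v ord0)).
  Eauto.
have Hn : forall y (xs : vec 0), nrec 0 (fun i r => 4 * vtail (vcons i (vcons r xs)) ord0
          + 2 * dec (vcons i (vcons r xs) ord0) (vtail (vcons i (vcons r xs)) ord0)) y = Qf y.
  move=> y xs; elim: y => //= y ->. by rewrite vtail_vcons !vcons0.
have H := @E_rec 0 (fun _ => 0) _ _ (E_zero _) Hh Hj.
have Hb : forall y (xs : vec 0), nrec 0 (fun i r => 4 * vtail (vcons i (vcons r xs)) ord0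
          + 2 * dec (vcons i (vcons r xs) ord0) (vtail (vcons i (vcons r xs)) ord0)) y
          <= 4 ^ (vcons y xs ord0).
  move=> y xs; rewrite Hn vcons0. exact: ltnW (Qf_lt y).
have H2 := H Hb.
rewrite /Grz1. refine (E_ext H2 _) => v. by rewrite Hn.
Qed.

Open Scope R_scope.

Lemma INRadd a b : INR (a + b)%N = INR a + INR b.
Proof. rewrite -plus_INR. reflexivity. Qed.
Lemma INRmul a b : INR (a * b)%N = INR a * INR b.
Proof. rewrite -mult_INR. reflexivity. Qed.
Lemma INRsub a b : (b <= a)%N -> INR (a - b)%N = INR a - INR b.
Proof. move=> /leP h. rewrite -minus_INR //. Qed.
Lemma INRexpn a b : INR (a ^ b)%N = INR a ^ b.
Proof. elim: b => [|b IH]; first by rewrite expn0 /=. by rewrite expnS INRmul IH /=. Qed.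
Lemma INR4 : INR 4 = 4.
Proof. simpl; lra. Qed.
Lemma INRle a b : (a <= b)%N -> INR a <= INR b.
Proof. move=> /leP; exact: le_INR. Qed.

Definition q (n : nat) : R := INR (Qf n) / 4 ^ n.

Lemma pow4_pos n : 0 < 4 ^ n.
Proof. apply: pow_lt; lra. Qed.

Lemma q_S n : q n.+1 = q n + 2 * INR (dec n (Qf n)) / 4 ^ n.+1.
Proof.
rewrite /q Qf_S INRadd !INRmul /=.
have := pow4_pos n. move=> h. field. lra.
Qed.

Lemma dec01 n : 0 <= INR (dec n (Qf n)) <= 1.
Proof. split; [exact: pos_INR| ]. have := INRle (dec_le1 n (Qf n)). simpl. lra. Qed.

Lemma q_grow : Un_growing q.
Proof.
move=> n. rewrite q_S. have := dec01 n. have := pow4_pos n.+1.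
move=> h1 h2. have : 0 <= 2 * INR (dec n (Qf n)) / 4 ^ n.+1.
  apply: Rmult_le_pos; [lra| apply: Rlt_le; exact: Rinv_0_lt_compat].
lra.
Qed.

Lemma q_ub n t : q (n + t)%nat <= q n + 2 / 3 * (1 / 4 ^ n - 1 / 4 ^ (n + t)%nat).
Proof.
elim: t => [|t IH]; first by rewrite addn0; lra.
rewrite addnS q_S.
have h1 := dec01 (n + t)%nat.
have hp := pow4_pos (n + t)%nat.
have : 2 * INR (dec (n + t) (Qf (n + t))) / 4 ^ (n + t).+1 <= 2 / 4 ^ (n + t).+1.
  rewrite /Rdiv. apply: Rmult_le_compat_r.
  - apply: Rlt_le; apply: Rinv_0_lt_compat; exact: pow4_pos.
  - lra.
have e : 2 / 4 ^ (n + t).+1 = 2 / 3 * (1 / 4 ^ (n + t)%nat - 1 / 4 ^ (n + t).+1).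
  rewrite /=. field. lra.
lra.
Qed.

Lemma q_mono m n : (m <= n)%nat -> q m <= q n.
Proof.
move=> /subnK <-. elim: (n - m)%nat => [|t IH]; first by rewrite add0n; lra.
apply: Rle_trans IH _. rewrite addSn. exact: q_grow.
Qed.

Lemma q_le n m : q m <= q n + 2 / 3 / 4 ^ n.
Proof.
have hp := pow4_pos n.
have h0 : 0 <= 2 / 3 / 4 ^ n.
  rewrite /Rdiv. apply: Rmult_le_pos; [lra| apply: Rlt_le; exact: Rinv_0_lt_compat].
case: (leqP n m) => h.
- rewrite -(subnKC h). apply: Rle_trans (q_ub _ _) _.
  have : 0 <= 1 / 4 ^ (n + (m - n))%nat.
    apply: Rlt_le. apply: Rdiv_lt_0_compat; [lra| exact: pow4_pos].
  have -> : 2 / 3 / 4 ^ n = 2 / 3 * (1 / 4 ^ n) by field; lra.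
  lra.
- have := q_mono (ltnW h). lra.
Qed.

Lemma q_has_ub : has_ub q.
Proof. exists (q 0 + 2 / 3 / 4 ^ 0). move=> x [m ->]. exact: q_le. Qed.

Definition alpha : R := proj1_sig (growing_cv q q_grow q_has_ub).

Lemma alpha_cv : Un_cv q alpha.
Proof. exact: proj2_sig (growing_cv q q_grow q_has_ub). Qed.

Lemma alpha_lb n : q n <= alpha.
Proof. exact: growing_ineq q_grow alpha_cv n. Qed.

Lemma cv_le_ub (u : nat -> R) l B : Un_cv u l -> (forall n, u n <= B) -> l <= B.
Proof.
move=> Hc Hb. case: (Rle_dec l B) => // /Rnot_le_lt h.
have [N HN] := Hc (l - B) ltac:(lra).
have := HN N (le_n N). rewrite /Rdist => /Rabs_def2 [h1 h2].
have := Hb N. lra.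
Qed.

Lemma alpha_ub n : alpha <= q n + 2 / 3 / 4 ^ n.
Proof. apply: cv_le_ub alpha_cv _ => m. exact: q_le. Qed.

Close Scope R_scope.

Lemma grz2_3 k (f : fn k) : Grz 2 f -> Grz 3 f.
Proof.
elim => {k f}.
- move=> k; exact: GrzZero.
- exact: GrzSucc.
- move=> k i; exact: GrzProj.
- have H : E (fun v : vec 2 => (v ord0 * v ord_max)%N) := E2_mul.
  refine (E_ext H _) => x. reflexivity.
- move=> m k f gs _ Hf _ Hg. exact: (GrzComp Hf Hg).
- move=> m g h j _ Hg _ Hh _ Hj Hb. exact: (GrzBRec Hg Hh Hj Hb).
- move=> k f g _ Hf e. exact: GrzExt Hf e.
Qed.

Open Scope R_scope.

Lemma abs_le x r : Rabs x <= r -> x <= r /\ - x <= r.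
Proof.
move=> h; split; [exact: Rle_trans (Rle_abs x) h|].
apply: Rle_trans (Rle_abs (- x)) _. by rewrite Rabs_Ropp.
Qed.

Lemma alpha_E3 : Ecomputable 3 alpha.
Proof.
exists Qf, (fun _ => 0%N), (fun x => 4 ^ x - 1)%N.
split; first exact: Grz_Qf.
split; first exact: GrzZero.
split.
  rewrite /Grz1. apply: E_sub; [apply: E_pow; [exact: E_const | exact: E_proj] | exact: E_const].
move=> x.
have hp := pow4_pos x.
have e : seqA Qf (fun _ => 0%N) (fun x => 4 ^ x - 1)%N x = q x.
  rewrite /seqA /q INRsub; last by rewrite expn_gt0.
  rewrite INRexpn INR4 /=. field. lra.
rewrite e.
have h1 := alpha_lb x. have h2 := alpha_ub x.
have hx : (INR x + 1) * (2 / 3) <= 4 ^ x.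
  have : (x.+1 <= 4 ^ x)%N by apply: ltn_expl.
  move/INRle. rewrite INRexpn INR4 S_INR. lra.
have hx0 := pos_INR x.
have : 2 / 3 / 4 ^ x <= 1 / (INR x + 1).
  have e1 : 1 / (INR x + 1) - 2 / 3 / 4 ^ x =
     (4 ^ x - (INR x + 1) * (2 / 3)) * / ((INR x + 1) * 4 ^ x) by field; lra.
  have : 0 <= (4 ^ x - (INR x + 1) * (2 / 3)) * / ((INR x + 1) * 4 ^ x).
    apply: Rle_mult_inv_pos; [lra | apply: Rmult_lt_0_compat; lra].
  lra.
move=> h3.
rewrite Rabs_left1; lra.
Qed.

Lemma INR12 : INR 12 = 12. Proof. simpl; lra. Qed.
Lemma INR3 : INR 3 = 3. Proof. simpl; lra. Qed.
Lemma INR2 : INR 2 = 2. Proof. simpl; lra. Qed.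
Lemma INR1 : INR 1 = 1. Proof. simpl; lra. Qed.

Lemma alpha_notE2 : ~ Ecomputable 2 alpha.
Proof.
move=> [f [g [h [Hf [Hg [Hh H]]]]]].
have [c1 [d1 R1]] := run_ok Hf.
have [c2 [d2 R2]] := run_ok Hg.
have [c3 [d3 R3]] := run_ok Hh.
set e := pair c1 (pair c2 c3).
set k := pair e (d1 + d2 + d3).
have hk : (d1 + d2 + d3 <= k)%N by rewrite /k /pair; nia.
have hfk : fst' k = e by rewrite fst_pair.
set X := xk k.
have hT : forall d, (d <= k)%N -> ((X + 2) ^ d <= Tk k)%N.
  move=> d hd; apply: leq_pexp2l => //. lia.
have ea : run (ca k) X (Tk k) = f X.
  rewrite /ca hfk fst_pair; apply: R1; apply: hT; lia.
have eb : run (cb k) X (Tk k) = g X.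
  rewrite /cb hfk snd_pair fst_pair; apply: R2; apply: hT; lia.
have ec : run (cc k) X (Tk k) = h X.
  rewrite /cc hfk !snd_pair; apply: R3; apply: hT; lia.
have HX := H X.
set Q := Qf k.
have hU := pow4_pos k.+1.
have hc := pos_INR (h X).
have eX : INR X + 1 = 4 * 4 ^ k.+1.
  rewrite /X /xk INRsub; last by rewrite expn_gt0.
  rewrite INRexpn INR4 addn2 /=. lra.
move: HX. rewrite /seqA eX => /abs_le [HX1 HX2].
set A := (INR (f X) - INR (g X)) / (INR (h X) + 1) in HX1 HX2.
have hA : A * (INR (h X) + 1) = INR (f X) - INR (g X) by rewrite /A; field; lra.
have hqS : q k.+1 = INR (Qf k.+1) / 4 ^ k.+1 by [].
have hub := alpha_ub k.+1.
have hlb := alpha_lb k.+1.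
set U := 4 ^ k.+1 in hU eX HX1 HX2 hqS hub hlb.
have HX1' : (A - alpha) * U <= 1 / 4.
  have := Rmult_le_compat_r U _ _ (Rlt_le _ _ hU) HX1.
  have -> : 1 / (4 * U) * U = 1 / 4 by field; lra. done.
have HX2' : - (A - alpha) * U <= 1 / 4.
  have := Rmult_le_compat_r U _ _ (Rlt_le _ _ hU) HX2.
  have -> : 1 / (4 * U) * U = 1 / 4 by field; lra. done.
have hQS := Qf_S k. rewrite -/Q in hQS.
have hdec : dec k Q = ifz ((12 * Q + 4) * (h X).+1 + g X * 3 * 4 ^ (k + 1)
       - f X * 3 * 4 ^ (k + 1))%N 0%N 1%N.
  by rewrite /dec -ea -eb -ec.
have eU : INR (4 ^ (k + 1))%N = U by rewrite INRexpn INR4 addn1.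
case: (leqP ((12 * Q + 4) * (h X).+1 + g X * 3 * 4 ^ (k + 1))%N (f X * 3 * 4 ^ (k + 1))%N) => hcase.
-
  have hd0 : dec k Q = 0%N.
    rewrite hdec /ifz. by move: hcase; rewrite -subn_eq0 => /eqP ->.
  rewrite hd0 muln0 addn0 in hQS.
  have hr := INRle hcase.
  rewrite ?(INRadd, INRmul, eU, S_INR, INR_0) in hr.
  have hal : alpha * U <= 4 * INR Q + 2 / 3.
    have := Rmult_le_compat_r U _ _ (Rlt_le _ _ hU) hub.
    rewrite hqS hQS INRmul.
    have -> : (INR 4 * INR Q / U + 2 / 3 / U) * U = INR 4 * INR Q + 2 / 3 by field; lra.
    rewrite INR4. done.
  have hAU : 3 * (A * U) >= 12 * INR Q + 4.
    have h12 : (3 * (A * U) - (12 * INR Q + 4)) * (INR (h X) + 1) >= 0.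
      have -> : (3 * (A * U) - (12 * INR Q + 4)) * (INR (h X) + 1) =
                3 * U * (A * (INR (h X) + 1)) - (12 * INR Q + 4) * (INR (h X) + 1) by ring.
      rewrite hA. nra.
    nra.
  nra.
-
  have hd1 : dec k Q = 1%N.
    rewrite hdec /ifz. have : ((12 * Q + 4) * (h X).+1 + g X * 3 * 4 ^ (k + 1)
       - f X * 3 * 4 ^ (k + 1))%N != 0%N by rewrite subn_eq0 -ltnNge.
    by move/negbTE => ->.
  rewrite hd1 in hQS.
  have hr := INRle hcase.
  rewrite ?(INRadd, INRmul, eU, S_INR, INR_0) in hr.
  have hal : alpha * U >= 4 * INR Q + 2.
    have := Rmult_le_compat_r U _ _ (Rlt_le _ _ hU) hlb.
    rewrite hqS hQS INRadd !INRmul.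
    have -> : (INR 4 * INR Q + INR 2 * INR 1) / U * U = INR 4 * INR Q + INR 2 * INR 1 by field; lra.
    rewrite INR4 INR2 INR1. lra.
  have hAU : 3 * (A * U) < 12 * INR Q + 4.
    have h12 : (3 * (A * U) - (12 * INR Q + 4)) * (INR (h X) + 1) < 0.
      have -> : (3 * (A * U) - (12 * INR Q + 4)) * (INR (h X) + 1) =
                3 * U * (A * (INR (h X) + 1)) - (12 * INR Q + 4) * (INR (h X) + 1) by ring.
      rewrite hA. nra.
    nra.
  nra.
Qed.


Theorem mainTheorem16 :
  (forall alpha : R, Ecomputable 2 alpha -> Ecomputable 3 alpha) /\
  (exists alpha : R, Ecomputable 3 alpha /\ ~ Ecomputable 2 alpha).
Proof.
split.
- move=> a [f [g [h [Hf [Hg [Hh H]]]]]].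
  exists f, g, h. split; [exact: grz2_3 Hf|]. split; [exact: grz2_3 Hg|].
  split; [exact: grz2_3 Hh|]. exact: H.
- exists alpha. split; [exact: alpha_E3 | exact: alpha_notE2].
Qed.
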